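(* Let $S=\{x_1,\ldots,x_n\}$ be a factor-closed set of $n$ distinct positive integers, let $m\ge1$, $\boldsymbol\gamma=(\gamma_1,\ldots,\gamma_m)\in\mathbb{N}^m$, $f_1,\ldots,f_{m+1}$ arithmetic functions, and $\xi:\mathbb{N}^m\to\mathbb{C}$ an arbitrary function. Let $I=\{2,3,\ldots,m+1\}$ if $m$ is even and $I=\{1,2,\ldots,m+1\}$ if $m$ is odd. Then \[ \det_I\bigl(S^{\boldsymbol\gamma,\xi}_{f_1,\ldots,f_{m+1}}(x_{i_1},\ldots,x_{i_{m+1}})\bigr)_{1\le i_1,\ldots,i_{m+1}\le n}=\bigl(f_1(1)\cdots f_m(1)\bigr)^n\prod_{v=1}^n\xi(x_v,\ldots,x_v)\,f_{m+1}^{[\operatorname{lcm}(\gamma_1,\ldots,\gamma_m)]}(x_v). \]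
   Context: A set $S$ of positive integers is factor-closed if every positive divisor of every element of $S$ lies in $S$. An arithmetic function is a map $f:\mathbb{N}\to\mathbb{C}$, with $f(x)=0$ for $x\notin\mathbb{N}$. For $\gamma\in\mathbb{N}$, $a_\gamma(n)=1$ if $n=d^\gamma$ for some $d\in\mathbb{N}$ and $0$ otherwise, and $f^{[\gamma]}(n):=a_\gamma(n)f(n)$. The weighted multiple Ramanujan sum is \[ S^{\boldsymbol\gamma,\xi}_{f_1,\ldots,f_{m+1}}(n_1,\ldots,n_{m+1}):=\sum_{\substack{(d_1,\ldots,d_m)\in\mathbb{N}^m\\ d_j^{\gamma_j}\mid\gcd(n_1,\ldots,n_{j+1})\ (1\le j\le m)}}\xi(d_1^{\gamma_1},\ldots,d_m^{\gamma_m})\,f_1\Bigl(\frac{n_1}{d_1^{\gamma_1}}\Bigr)f_2\Bigl(\frac{d_1^{\gamma_1}}{d_2^{\gamma_2}}\Bigr)\cdots f_m\Bigl(\frac{d_{m-1}^{\gamma_{m-1}}}{d_m^{\gamma_m}}\Bigr)f_{m+1}\bigl(d_m^{\gamma_m}\bigr). \] For a $K$-dimensional matrix $A$ of order $n$ and $J\subseteq\{1,\ldots,K\}$, with $\eta_j=1$ if $j\in J$ and $0$ otherwise, the hyperdeterminant is $\det_JA:=\frac{1}{n!}\sum_{\sigma_1,\ldots,\sigma_K\in\mathfrak{S}_n}\prod_{j=1}^K\mathrm{sgn}(\sigma_j)^{\eta_j}\prod_{v=1}^nA(\sigma_1(v),\ldots,\sigma_K(v))$, $\mathfrak{S}_n$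 the symmetric group on $\{1,\ldots,n\}$. *)

(* Defs.v *)
From HB Require Import structures.
From mathcomp Require Import all_boot all_order all_algebra all_fingroup.
From mathcomp Require Import complex.
From mathcomp Require Import Rstruct.
Set Implicit Arguments. Unset Strict Implicit. Unset Printing Implicit Defensive.
Import Order.TTheory GRing.Theory Num.Theory.
Local Open Scope ring_scope.

Definition C : numClosedFieldType := (Rdefinitions.R)[i].

(* An arithmetic function is f : nat -> C (only its values on positive
   integers matter).  [argq f a b] is f(a/b) for a rational argument a/b,
   a, b natural: it is f(a %/ b) when a/b is a positive integer, else 0
   (since arithmetic functions vanish outside N = {1,2,...}). *)
Definition argq (f : nat -> C) (a b : nat) : C :=
  if [&& 0 < a, 0 < b & b %| a]%N then f (a %/ b)%N else 0.

(* a_gamma(n) = 1 iff n = d^gamma for some positive integer d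
   (for n >= 1 such a d satisfies d <= n, so the search is bounded). *)
Definition is_pow (g n : nat) : bool :=
  [exists d : 'I_n.+1, (0 < d)%N && (d ^ g == n)%N].

Definition fpow (g : nat) (f : nat -> C) (n : nat) : C :=
  if is_pow g n then f n else 0.

(* gcd(n_1, ..., n_{j+1}) (0-indexed: gcd of ns k for k <= j) *)
Definition gcd_upto m (ns : 'I_m.+1 -> nat) (j : nat) : nat :=
  \big[gcdn/0%N]_(k < m.+1 | (k <= j)%N) ns k.

Definition dpow m (g : 'I_m -> nat) (d : 'I_m -> nat) (i : nat) : nat :=
  oapp (fun j : 'I_m => (d j) ^ (g j))%N 1%N (insub i).

(* e_0 = n_1, e_k = d_k^{gamma_k} (1<=k<=m), e_{m+1} = 1, so that the
   summand product is  prod_{k=1}^{m+1} f_k(e_{k-1}/e_k). *)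
Definition echain m (g : 'I_m -> nat) (ns : 'I_m.+1 -> nat) (d : 'I_m -> nat)
    (k : nat) : nat :=
  if k == 0%N then ns ord0 else dpow g d k.-1.

(* The tuple (d_1..d_m) ranges over positive integers with
   d_j^{gamma_j} | gcd(n_1..n_{j+1}); for n_1 >= 1 and gamma_j >= 1 this forces
   d_j <= n_1, so the sum over d_j in [0, n_1] (with d_j > 0) is the full sum. *)
Definition wmrs m (g : 'I_m -> nat) (xi : {ffun 'I_m -> nat} -> C)
    (f : 'I_m.+1 -> nat -> C) (ns : 'I_m.+1 -> nat) : C :=
  \sum_(d : {ffun 'I_m -> 'I_(ns ord0).+1} |
          [forall j : 'I_m, (0 < d j)%N && ((d j) ^ (g j) %| gcd_upto ns j.+1)%N])
    xi [ffun j => ((d j) ^ (g j))%N] *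
    \prod_(k < m.+1) argq (f k) (echain g ns (fun j => d j) k)
                                (echain g ns (fun j => d j) k.+1).

Definition hdet K n (J : {set 'I_K}) (A : {ffun 'I_K -> 'I_n} -> C) : C :=
  (n`!%:R)^-1 *
  \sum_(s : {ffun 'I_K -> {perm 'I_n}})
     (\prod_(j in J) (-1) ^+ (odd_perm (s j))) *
     \prod_(v < n) A [ffun j => s j v].

Definition factor_closed n (x : 'I_n -> nat) : Prop :=
  forall (i : 'I_n) (d : nat), (0 < d)%N -> (d %| x i)%N -> exists j, x j = d.

(* Main.v *)
Set Warnings "-notation-overridden,-ambiguous-paths,-notation-incompatible-prefix".
Require Import Defs.
From HB Require Import structures.
From mathcomp Require Import all_boot all_order all_algebra all_fingroup.
From mathcomp Require Import zify.
Import GRing.Theory Num.Theory.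
Local Open Scope ring_scope.
Set Implicit Arguments. Unset Strict Implicit.


Lemma is_powP g y : (0 < g)%N -> (0 < y)%N ->
  reflect (exists2 d, (0 < d)%N & (d ^ g)%N = y) (is_pow g y).
Proof.
move=> g0 y0; apply: (iffP existsP).
  by case=> d /andP[d0 /eqP <-]; exists d.
case=> d d0 dy; have dle : (d < y.+1)%N.
  by rewrite ltnS -dy -{1}(expn1 d) leq_pexp2l.
by exists (Ordinal dle); rewrite /= d0 dy eqxx.
Qed.

Lemma logn_prod_gen q (s : seq nat) (F : nat -> nat) :
  (forall i, 0 < F i)%N ->
  (0 < \prod_(i <- s) F i)%N /\
  logn q (\prod_(i <- s) F i) = (\sum_(i <- s) logn q (F i))%N.
Proof.
move=> F0; apply: (big_ind2 (fun a b => (0 < a)%N /\ logn q a = b)).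
- by rewrite logn1.
- by move=> a1 b1 a2 b2 [a10 <-] [a20 <-]; rewrite muln_gt0 a10 a20 lognM.
- by move=> i _; rewrite F0.
Qed.

Lemma is_pow_lcm m (g : 'I_m -> nat) y : (forall j, 0 < g j)%N -> (0 < y)%N ->
  [forall j, is_pow (g j) y] = is_pow (\big[lcmn/1%N]_(j < m) g j) y.
Proof.
move=> g0 y0; set L := \big[lcmn/1%N]_(j < m) g j.
have L0 : (0 < L)%N.
  by apply: (big_ind (fun a => 0 < a)%N) => // a b a0 b0; rewrite lcmn_gt0 a0 b0.
apply/forallP/(is_powP L0 y0).
  move=> H.
  have dvdL : forall q, (L %| logn q y)%N.
    move=> q; apply/dvdn_biglcmP => j _.
    have /(is_powP (g0 j) y0) [d d0 <-] := H j.
    by rewrite lognX dvdn_mulr.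
  pose z := (\prod_(p <- primes y) p ^ (logn p y %/ L))%N.
  have Fpos : forall p, (0 < (if prime p then p ^ (logn p y %/ L) else 1))%N.
    by move=> p; case: ifP => // pp; rewrite expn_gt0 prime_gt0.
  have ez : z = (\prod_(p <- primes y) (if prime p then p ^ (logn p y %/ L) else 1))%N.
    by apply: eq_big_seq => p; rewrite mem_primes => /andP[-> _].
  have [z0 lz] : (0 < z)%N /\ forall q, prime q -> logn q z = (logn q y %/ L)%N.
    have [z0 _] := logn_prod_gen 0 (primes y) Fpos.
    split; first by rewrite ez.
    move=> q qp.
    rewrite ez; have [_ ->] := logn_prod_gen q (primes y) Fpos.
    case qy: (q \in primes y).
      rewrite (bigD1_seq q) ?primes_uniq // /= qp (pfactorK _ qp).
      rewrite big1_seq ?addn0 // => p /andP[pq]; rewrite mem_primes => /andP[pp _].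
      by rewrite pp lognX (logn_prime q pp) eq_sym (negbTE pq) muln0.
    have -> : logn q y = 0%N.
      by apply/eqP; rewrite -leqn0 leqNgt logn_gt0 qy.
    rewrite div0n big1_seq // => p /andP[_ hp].
    have pq : q != p by apply: contraFneq qy => ->.
    move: hp; rewrite mem_primes => /andP[pp _].
    by rewrite pp lognX (logn_prime q pp) (negbTE pq) muln0.
  exists z => //; apply: eqn_from_log => //; first by rewrite expn_gt0 z0.
  move=> q; case qp: (prime q); last by rewrite (lognE q y) (lognE q (z ^ L)) qp.
  by rewrite lognX lz // mulnC divnK.
case=> z z0 <- j; apply/(is_powP (g0 j)); first by rewrite expn_gt0 z0.
exists (z ^ (L %/ g j))%N; first by rewrite expn_gt0 z0.
by rewrite -expnM divnK //; apply: (biglcmn_sup j).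
Qed.


Lemma prod_nat_bool (I : finType) (P : pred I) :
  \prod_i (P i)%:R = ([forall i, P i])%:R :> C.
Proof.
case: forallP => [H|]; first by rewrite big1 // => i _; rewrite H.
move=> /forallP; rewrite negb_forall => /existsP[i /negbTE Pi].
by rewrite (bigD1 i) //= Pi mul0r.
Qed.

Lemma sum_ind_eq (I : finType) (q : I) (F : I -> C) :
  \sum_p (p == q)%:R * F p = F q.
Proof.
rewrite -[RHS](big_pred1_eq +%R q F) big_mkcond /=; apply: eq_bigr => p _.
by case: eqP => _; rewrite ?mul1r ?mul0r.
Qed.

Lemma perm_le_eq n (x : 'I_n -> nat) (p1 p2 : {perm 'I_n}) :
  injective x -> (forall v, x (p1 v) <= x (p2 v))%N -> p1 = p2.
Proof.
move=> xinj le12.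
have S : forall p : {perm 'I_n}, (\sum_v x (p v) = \sum_v x v)%N.
  by move=> p; rewrite [RHS](reindex_inj (@perm_inj _ p)).
have : (\sum_v (x (p2 v) - x (p1 v)) == 0)%N.
  by rewrite (sumnB _ (fun i _ => le12 i)) S S subnn.
rewrite sum_nat_eq0 => /forallP H.
apply/permP => v; apply: xinj; apply/eqP; rewrite eqn_leq le12 /=.
by rewrite -subn_eq0; apply: (H v).
Qed.

Definition sgJ K n (J : {set 'I_K}) (j : 'I_K) (p : {perm 'I_n}) : C :=
  if j \in J then (-1) ^+ p else 1.

Lemma sgJE K n (J : {set 'I_K}) (s : {ffun 'I_K -> {perm 'I_n}}) :
  \prod_(j in J) (-1) ^+ (s j) = \prod_j sgJ J j (s j) :> C.
Proof. by rewrite big_mkcond. Qed.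

Lemma hdet_triang K n (J : {set 'I_K.+1}) (x : 'I_n -> nat)
    (W : {ffun 'I_K.+1 -> 'I_n} -> C) :
  injective x -> ~~ odd #|J| ->
  (forall k, W k != 0 -> forall j, (x (k j) <= x (k ord0))%N) ->
  hdet J W = \prod_(v < n) W [ffun => v].
Proof.
move=> xinj evJ hW; rewrite /hdet.
set F := fun q : {ffun 'I_K.+1 -> {perm 'I_n}} =>
  (\prod_(j in J) (-1) ^+ odd_perm (q j)) * \prod_(v < n) W [ffun j => q j v].
have E : forall q, F q = \sum_(p : {perm 'I_n}) (q == [ffun => p])%:R * F q.
  move=> q; case: (eqVneq (\prod_(v < n) W [ffun j => q j v]) 0) => [z | nz].
    by rewrite /F z mulr0 big1 // => p _; rewrite mulr0.
  have eq : q = [ffun => q ord0].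
    apply/ffunP => j; rewrite ffunE; apply: perm_le_eq xinj _ => v.
    have /prodf_neq0 /(_ v isT) := nz.
    by move=> /hW /(_ j); rewrite !ffunE.
  rewrite (eq_bigr (fun p => (p == q ord0)%:R * F q)) ?sum_ind_eq // => p _.
  congr ((nat_of_bool _)%:R * _); apply/idP/idP => /eqP e; apply/eqP; [by rewrite e ffunE | by rewrite e].
rewrite (eq_bigr _ (fun q _ => E q)) exchange_big /=.
rewrite (eq_bigr (fun _ => \prod_(v < n) W [ffun => v])); last first.
  move=> p _; rewrite (eq_bigr (fun q => (q == [ffun => p])%:R * F q)) //.
  rewrite sum_ind_eq /F (eq_bigr (fun _ => (-1) ^+ odd_perm p)); last first.
    by move=> j _; rewrite ffunE.
  rewrite prodr_const.
  have -> : #|J| = (#|J|./2).*2 by rewrite -[LHS]odd_double_half (negbTE evJ).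
  rewrite -mul2n exprM sqrr_sign expr1n mul1r.
  rewrite [RHS](reindex_inj (@perm_inj _ p)); apply: eq_bigr => v _.
  by congr W; apply/ffunP => j; rewrite !ffunE.
rewrite sumr_const card_Sn -[X in _ * X]mulr_natl mulrA mulVf ?mul1r //.
by rewrite pnatr_eq0 -lt0n fact_gt0.
Qed.


Lemma prod_sum (I J : finType) (F : I -> J -> C) :
  \prod_i \sum_j F i j = \sum_(f : {ffun I -> J}) \prod_i F i (f i).
Proof. exact: bigA_distr_bigA. Qed.

Lemma prod_split (I : finType) (F G : I -> C) :
  \prod_i (F i * G i) = \prod_i F i * \prod_i G i.
Proof. exact: big_split. Qed.

Lemma prod_exch (I J : finType) (F : I -> J -> C) :
  \prod_i \prod_j F i j = \prod_j \prod_i F i j.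
Proof. exact: exchange_big. Qed.

Lemma prod_nat_bool2 (I J : finType) (P : I -> J -> bool) :
  \prod_i \prod_j (P i j)%:R = ([forall i, forall j, P i j])%:R :> C.
Proof.
rewrite (eq_bigr (fun i => ([forall j, P i j])%:R)); last by move=> i _; exact: prod_nat_bool.
exact: prod_nat_bool.
Qed.

Lemma G_eval K n (J : {set 'I_K}) (M : 'M[C]_n) (j : 'I_K) (t : 'I_n -> 'I_n) :
  (j \notin J -> M = 1%:M) ->
  \sum_(p : {perm 'I_n}) sgJ J j p * \prod_v M (p v) (t v)
  = \sum_(p : {perm 'I_n}) (\prod_v (p v == t v)%:R) * (sgJ J j p * \det M).
Proof.
move=> hM; rewrite /sgJ; case jJ: (j \in J); last first.
  have -> : M = 1%:M by apply: hM; rewrite jJ.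
  rewrite det1; apply: eq_bigr => p _; rewrite !mul1r mulr1.
  by apply: eq_bigr => v _; rewrite mxE.
under [RHS]eq_bigr do rewrite prod_nat_bool.
case: (injectiveP t) => tinj.
  set q := perm tinj.
  rewrite [RHS](eq_bigr (fun p => (p == q)%:R * ((-1) ^+ p * \det M))); last first.
    move=> p _; congr ((nat_of_bool _)%:R * _).
    apply/idP/idP => [/forallP H | /eqP ->]; last by apply/forallP => v; rewrite permE.
    by apply/eqP/permP => v; rewrite permE; apply/eqP.
  rewrite sum_ind_eq.
  rewrite (eq_bigr (fun p : {perm 'I_n} => (-1) ^+ p * \prod_v M (p v) (q v))); last first.
    by move=> p _; congr (_ * _); apply: eq_bigr => v _; rewrite permE.
  rewrite -det_tr /determinant mulr_sumr (reindex_inj (mulgI q)).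
  apply: eq_bigr => s _; rewrite odd_permM signr_addb -mulrA; congr (_ * (_ * _)).
  rewrite [RHS](reindex_inj (@perm_inj _ q)); apply: eq_bigr => v _.
  by rewrite permM mxE.
rewrite [RHS]big1 => [|p _]; last first.
  suff /negbTE -> : ~~ [forall v, p v == t v] by rewrite mul0r.
  apply: contra_notN tinj => /forallP H v1 v2 e.
  by apply: (@perm_inj _ p); rewrite (eqP (H v1)) (eqP (H v2)).
have /injectivePn [v1 [v2 ne e]] : ~~ injectiveb t by apply/injectiveP.
transitivity (\det (\matrix_(v, w) M w (t v))).
  rewrite /determinant; apply: eq_bigr => p _; congr (_ * _).
  by apply: eq_bigr => v _; rewrite mxE.
by apply: (determinant_alternate ne) => w; rewrite !mxE e.
Qed.

Lemma hdet_contract K n (J : {set 'I_K}) (M : 'I_K -> 'M[C]_n)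
    (W : {ffun 'I_K -> 'I_n} -> C) :
  (forall j, j \notin J -> M j = 1%:M) ->
  hdet J (fun i => \sum_(k : {ffun 'I_K -> 'I_n}) (\prod_j M j (i j) (k j)) * W k)
  = (\prod_j \det (M j)) * hdet J W.
Proof.
move=> hM; rewrite /hdet mulrCA; congr (_ * _).
transitivity (\sum_(κ : {ffun 'I_n -> {ffun 'I_K -> 'I_n}})
   (\prod_v W (κ v)) *
   \prod_j \sum_(p : {perm 'I_n}) sgJ J j p * \prod_v M j (p v) (κ v j)).
  rewrite (eq_bigr (fun s : {ffun 'I_K -> {perm 'I_n}} => \sum_(κ : {ffun 'I_n -> {ffun 'I_K -> 'I_n}})
     (\prod_j sgJ J j (s j)) *
     \prod_v ((\prod_j M j (s j v) (κ v j)) * W (κ v)))); last first.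
    move=> s _; rewrite sgJE prod_sum mulr_sumr; apply: eq_bigr => κ _.
    congr (_ * _); apply: eq_bigr => v _; congr (_ * _).
    by apply: eq_bigr => j _; rewrite ffunE.
  rewrite exchange_big; apply: eq_bigr => κ _ /=.
  rewrite (prod_sum (fun j (p : {perm 'I_n}) => sgJ J j p * \prod_v M j (p v) (κ v j))) mulr_sumr; apply: eq_bigr => s _.
  rewrite !prod_split [in LHS]prod_exch.
  by rewrite mulrA mulrC.
rewrite (eq_bigr (fun κ : {ffun 'I_n -> {ffun 'I_K -> 'I_n}} =>
   \sum_(q : {ffun 'I_K -> {perm 'I_n}}) (κ == [ffun v => [ffun j => q j v]])%:R *
     ((\prod_v W (κ v)) * \prod_j (sgJ J j (q j) * \det (M j))))); last first.
  move=> κ _; rewrite [X in _ * X](eq_bigr (fun j => \sum_(p : {perm 'I_n})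
     (\prod_v (p v == κ v j)%:R) * (sgJ J j p * \det (M j)))); last first.
    by move=> j _; apply: G_eval; apply: hM.
  rewrite prod_sum mulr_sumr; apply: eq_bigr => q _.
  rewrite [in LHS]prod_split prod_nat_bool2.
  have -> : [forall j, forall v, q j v == κ v j] = (κ == [ffun v => [ffun j => q j v]]).
    apply/idP/idP => [/forallP H | /eqP ->].
      apply/eqP/ffunP => v; apply/ffunP => j; rewrite !ffunE.
      by rewrite (eqP (forallP (H j) v)).
    by apply/forallP => j; apply/forallP => v; rewrite !ffunE.
  by rewrite mulrCA.
rewrite exchange_big /= [RHS]mulr_sumr; apply: eq_bigr => q _.
rewrite sum_ind_eq sgJE prod_split.
have -> : \prod_v W ([ffun v => [ffun j => q j v]] v) = \prod_v W [ffun j => q j v].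
  by apply: eq_bigr => v _; rewrite ffunE.
by rewrite mulrC -mulrA mulrCA.
Qed.

Lemma det_divmx n (x : 'I_n -> nat) : injective x -> (forall i, 0 < x i)%N ->
  \det (\matrix_(a, b) ((x b %| x a)%N)%:R : 'M[C]_n) = 1.
Proof.
move=> xinj xpos; rewrite /determinant.
rewrite (eq_bigr (fun s : {perm 'I_n} => (s == 1%g)%:R * 1)).
  exact: (sum_ind_eq 1%g (fun _ => 1)).
move=> s _; rewrite (eq_bigr (fun i => (x (s i) %| x i)%N%:R)); last first.
  by move=> i _; rewrite mxE.
rewrite prod_nat_bool.
have -> : [forall i, x (s i) %| x i]%N = (s == 1%g).
  apply/idP/idP => [/forallP H | /eqP ->]; last first.
    by apply/forallP => i; rewrite perm1.
  apply/eqP; apply: (perm_le_eq xinj) => v; rewrite perm1.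
  exact: dvdn_leq (xpos v) (H v).
by case: eqP => [->|_]; rewrite ?odd_perm1 ?expr0 ?mul1r ?mulr0 ?mul0r.
Qed.


Lemma prod_recr m (F : 'I_m.+1 -> C) :
  \prod_(i < m.+1) F i = (\prod_(i < m) F (widen_ord (leqnSn m) i)) * F ord_max.
Proof. exact: big_ord_recr. Qed.

Lemma prod_recl m (F : 'I_m.+1 -> C) :
  \prod_(i < m.+1) F i = F ord0 * \prod_(i < m) F (lift ord0 i).
Proof. exact: big_ord_recl. Qed.

Lemma argq_nz (F : nat -> C) a b : argq F a b != 0 -> [&& (0 < a)%N, (0 < b)%N & (b %| a)%N].
Proof. by rewrite /argq; case: ifP => // _; rewrite eqxx. Qed.

Definition Ep n m (x : 'I_n -> nat) (k : {ffun 'I_m.+1 -> 'I_n}) (l : nat) : nat :=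
  if (l < m.+1)%N then x (k (inord l)) else 1%N.

Definition Gp n m (x : 'I_n -> nat) (f : 'I_m.+1 -> nat -> C)
    (xi : {ffun 'I_m -> nat} -> C) (k : {ffun 'I_m.+1 -> 'I_n}) : C :=
  xi [ffun j => x (k (lift ord0 j))] *
  \prod_(l < m.+1) argq (f l) (Ep x k l) (Ep x k l.+1).

Definition Wc n m (x : 'I_n -> nat) (g : 'I_m -> nat) (f : 'I_m.+1 -> nat -> C)
    (xi : {ffun 'I_m -> nat} -> C) (k : {ffun 'I_m.+1 -> 'I_n}) : C :=
  (\prod_(j < m) (is_pow (g j) (x (k (lift ord0 j))))%:R) * Gp x f xi k.

Definition Dmx n (x : 'I_n -> nat) : 'M[C]_n := \matrix_(a, b) ((x b %| x a)%N)%:R.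

Definition Mj n m (x : 'I_n -> nat) (j : 'I_m.+1) : 'M[C]_n :=
  if j == ord0 then 1%:M else Dmx x.

Lemma Gp_chain n m (x : 'I_n -> nat) (f : 'I_m.+1 -> nat -> C)
    (xi : {ffun 'I_m -> nat} -> C) (k : {ffun 'I_m.+1 -> 'I_n}) :
  Gp x f xi k != 0 -> forall a b, (a <= b <= m)%N ->
  (0 < Ep x k b)%N /\ (Ep x k b %| Ep x k a)%N.
Proof.
rewrite /Gp mulf_eq0 negb_or => /andP[_ /prodf_neq0 H] a b /andP[ab bm].
have step : forall l, (l < m)%N -> (0 < Ep x k l.+1)%N /\ (Ep x k l.+1 %| Ep x k l)%N.
  move=> l lm; have lm' : (l < m.+1)%N by apply: ltnW.
  have /argq_nz /and3P[_ h1 h2] := H (Ordinal lm') isT.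
  by [].
have pos : forall l, (l <= m)%N -> (0 < Ep x k l)%N.
  move=> l lm; have lm' : (l < m.+1)%N by [].
  by have /argq_nz /and3P[h0 _ _] := H (Ordinal lm') isT.
elim: b ab bm => [|b IH] ab bm.
  by rewrite leqn0 in ab; rewrite (eqP ab); split; [apply: pos|].
case: (ltngtP a b.+1) ab => // [lt|->] _; last by split; [apply: pos|].
have [_ d1] := IH lt (ltnW bm).
have [p2 d2] := step b bm.
by split => //; apply: dvdn_trans d2 d1.
Qed.

Lemma Ep_echain n m (x : 'I_n -> nat) (g : 'I_m -> nat) (i k : {ffun 'I_m.+1 -> 'I_n})
    (d : {ffun 'I_m -> 'I_(x (i ord0)).+1}) :
  k ord0 = i ord0 -> (forall j, x (k (lift ord0 j)) = (d j ^ g j)%N) ->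
  forall l, (l <= m.+1)%N -> Ep x k l = echain g (fun k => x (i k)) (fun j => d j) l.
Proof.
move=> k0 kd [|l] lm; rewrite /Ep /echain /=.
  have -> : inord 0 = ord0 :> 'I_m.+1 by apply: val_inj; rewrite /= inordK.
  by rewrite k0.
rewrite /dpow; case: insubP => /= [j jm jl|].
  rewrite ltnS jm; have -> : inord l.+1 = lift ord0 j.
    by apply: val_inj; rewrite /= inordK ?ltnS // jl.
  by rewrite kd.
rewrite ltnS => /negbTE -> //.
Qed.

Lemma match_Gp n m (x : 'I_n -> nat) (g : 'I_m -> nat) (f : 'I_m.+1 -> nat -> C)
    (xi : {ffun 'I_m -> nat} -> C) (i k : {ffun 'I_m.+1 -> 'I_n})
    (d : {ffun 'I_m -> 'I_(x (i ord0)).+1}) :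
  k ord0 = i ord0 -> (forall j, x (k (lift ord0 j)) = (d j ^ g j)%N) ->
  Gp x f xi k = xi [ffun j => (d j ^ g j)%N] *
    \prod_(l < m.+1) argq (f l) (echain g (fun k => x (i k)) (fun j => d j) l)
                                (echain g (fun k => x (i k)) (fun j => d j) l.+1).
Proof.
move=> k0 kd; rewrite /Gp; congr (xi _ * _).
  by apply/ffunP => j; rewrite !ffunE kd.
apply: eq_bigr => l _; rewrite !(Ep_echain k0 kd) //.
exact: ltnW.
Qed.

Lemma gcd_upto_dvd0 m (ns : 'I_m.+1 -> nat) j : (gcd_upto ns j %| ns ord0)%N.
Proof. exact: (biggcdn_inf ord0 (leq0n _) (dvdnn _)). Qed.

Lemma A1 n m (x : 'I_n -> nat) (g : 'I_m -> nat) (f : 'I_m.+1 -> nat -> C)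
    (xi : {ffun 'I_m -> nat} -> C) (i : {ffun 'I_m.+1 -> 'I_n})
    (d : {ffun 'I_m -> 'I_(x (i ord0)).+1}) :
  injective x -> factor_closed x ->
  [forall j, (0 < d j)%N && (d j ^ g j %| gcd_upto (fun k => x (i k)) j.+1)%N] ->
  \sum_(k : {ffun 'I_m.+1 -> 'I_n})
     ((k ord0 == i ord0) && [forall j, x (k (lift ord0 j)) == (d j ^ g j)%N])%:R
     * Gp x f xi k
  = xi [ffun j => (d j ^ g j)%N] *
    \prod_(l < m.+1) argq (f l) (echain g (fun k => x (i k)) (fun j => d j) l)
                                (echain g (fun k => x (i k)) (fun j => d j) l.+1).
Proof.
move=> xinj fc Pd.
have [k0 hk0] : exists k0 : {ffun 'I_m.+1 -> 'I_n},
    (k0 ord0 == i ord0) && [forall j, x (k0 (lift ord0 j)) == (d j ^ g j)%N].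
  have : forall l : 'I_m.+1, exists a : 'I_n,
      if unlift ord0 l is Some j then x a == (d j ^ g j)%N else a == i ord0.
    move=> l; case: (unlift ord0 l) => [j|]; last by exists (i ord0).
    have /andP[dpos ddvd] := forallP Pd j.
    have xN : (d j ^ g j %| x (i ord0))%N.
      exact: dvdn_trans ddvd (gcd_upto_dvd0 _ _).
    have dp : (0 < d j ^ g j)%N by rewrite expn_gt0 dpos.
    have [a xa] := fc (i ord0) _ dp xN.
    by exists a; rewrite xa.
  case/fin_all_exists => F HF; exists [ffun l => F l].
  rewrite ffunE; have := HF ord0; rewrite unlift_none => -> /=.
  by apply/forallP => j; have := HF (lift ord0 j); rewrite liftK ffunE.
have uniq : forall k : {ffun 'I_m.+1 -> 'I_n}, (k ord0 == i ord0) && [forall j, x (k (lift ord0 j)) == (d j ^ g j)%N]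
    = (k == k0).
  move: hk0 => /andP[/eqP h0 /forallP h1] k.
  apply/idP/idP => [/andP[/eqP e0 /forallP e1] | /eqP ->]; last by rewrite h0 eqxx; apply/forallP.
  apply/eqP/ffunP => l; case: (unliftP ord0 l) => [j ->|->]; last by rewrite e0 h0.
  by apply: xinj; rewrite (eqP (e1 j)) (eqP (h1 j)).
rewrite (eq_bigr (fun k : {ffun 'I_m.+1 -> 'I_n} => (k == k0)%:R * Gp x f xi k)); last first.
  by move=> k _; rewrite uniq.
rewrite sum_ind_eq; move: hk0 => /andP[/eqP h0 /forallP h1].
by apply: match_Gp => // j; apply/eqP.
Qed.

Lemma sum_unique (I : finType) (P : pred I) :
  (forall a b, P a -> P b -> a = b) -> \sum_a (P a)%:R = ([exists a, P a])%:R :> C.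
Proof.
move=> uP; case: existsP => [[a Pa] | nP].
  rewrite (eq_bigr (fun b => (b == a)%:R * 1)); first exact: (sum_ind_eq a (fun _ => 1)).
  move=> b _; rewrite mulr1; congr ((nat_of_bool _)%:R).
  by apply/idP/eqP => [Pb | ->] //; apply: uP.
rewrite big1 // => a _; case: (boolP (P a)) => // Pa.
by case: nP; exists a.
Qed.

Lemma A3 n m (x : 'I_n -> nat) (g : 'I_m -> nat) (i k : {ffun 'I_m.+1 -> 'I_n}) :
  (forall v, 0 < x v)%N -> (forall j, 0 < g j)%N ->
  \sum_(d : {ffun 'I_m -> 'I_(x (i ord0)).+1})
    ([forall j, (0 < d j)%N && (d j ^ g j %| gcd_upto (fun k => x (i k)) j.+1)%N] &&
     ((k ord0 == i ord0) && [forall j, x (k (lift ord0 j)) == (d j ^ g j)%N]))%:R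
  = (k ord0 == i ord0)%:R *
    \prod_(j < m) ((x (k (lift ord0 j)) %| gcd_upto (fun k => x (i k)) j.+1)%N
                   && is_pow (g j) (x (k (lift ord0 j))))%:R :> C.
Proof.
move=> xpos gpos.
set ns := fun k => x (i k).
pose h j (a : 'I_(x (i ord0)).+1) := [&& (0 < a)%N, (a ^ g j %| gcd_upto ns j.+1)%N
                                      & x (k (lift ord0 j)) == (a ^ g j)%N].
rewrite (eq_bigr (fun d : {ffun 'I_m -> 'I_(x (i ord0)).+1} =>
   (k ord0 == i ord0)%:R * \prod_j (h j (d j))%:R)); last first.
  move=> d _; rewrite prod_nat_bool -natrM mulnb; congr ((nat_of_bool _)%:R).
  rewrite andbCA; congr (_ && _).
  apply/andP/forallP => [[/forallP H1 /forallP H2] j | H].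
    by rewrite /h andbA H1 H2.
  split; apply/forallP => j; have /and3P[h1 h2 h3] := H j; by rewrite ?h1 ?h2 ?h3.
rewrite -mulr_sumr -(prod_sum (fun j (a : 'I_(x (i ord0)).+1) => (h j a)%:R)).
congr (_ * _); apply: eq_bigr => j _.
rewrite sum_unique; last first.
  move=> a b /and3P[_ _ /eqP ea] /and3P[_ _ /eqP eb]; apply: val_inj.
  by apply/eqP; rewrite -(eqn_exp2r _ _ (gpos j)) -ea -eb.
congr ((nat_of_bool _)%:R).
have N0 : (0 < x (i ord0))%N := xpos _.
have GN : (gcd_upto ns j.+1 %| x (i ord0))%N := gcd_upto_dvd0 _ _.
apply/existsP/andP => [[a /and3P[a0 adv /eqP ya]] | [ydv /(is_powP (gpos j) (xpos _)) [d d0 dy]]].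
  split; first by rewrite ya.
  by apply/(is_powP (gpos j) (xpos _)); exists a.
have dN : (d < (x (i ord0)).+1)%N.
  have d1 : (d <= d ^ g j)%N by rewrite -{1}(expn1 d) leq_pexp2l // gpos.
  have d2 : (x (k (lift ord0 j)) <= x (i ord0))%N.
    exact: dvdn_leq N0 (dvdn_trans ydv GN).
  by rewrite ltnS (leq_trans d1) // dy.
by exists (Ordinal dN); rewrite /h /= d0 dy ydv eqxx.
Qed.

Lemma A4 n m (x : 'I_n -> nat) (g : 'I_m -> nat) (f : 'I_m.+1 -> nat -> C)
    (xi : {ffun 'I_m -> nat} -> C) (i k : {ffun 'I_m.+1 -> 'I_n}) :
  Gp x f xi k * ((k ord0 == i ord0)%:R *
    \prod_(j < m) ((x (k (lift ord0 j)) %| gcd_upto (fun k => x (i k)) j.+1)%N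
                   && is_pow (g j) (x (k (lift ord0 j))))%:R)
  = (\prod_j Mj x j (i j) (k j)) * Wc x g f xi k.
Proof.
rewrite /Wc prod_recl /Mj eqxx mxE.
rewrite [X in _ = _ * X * _](eq_bigr (fun j : 'I_m => (x (k (lift ord0 j)) %| x (i (lift ord0 j)))%N%:R)); last first.
  move=> j _; have -> : (lift ord0 j == ord0 :> 'I_m.+1) = false by [].
  by rewrite /Dmx mxE.
case: (eqVneq (Gp x f xi k) 0) => [->|Gnz]; first by rewrite !(mul0r, mulr0).
case: (eqVneq (k ord0) (i ord0)) => [k0|k0]; last first.
  by rewrite !(mul0r, mulr0, mulr0n).
rewrite !mul1r !prod_nat_bool.
have ch := Gp_chain Gnz.
have E0 : Ep x k 0 = x (k ord0).
  by rewrite /Ep /=; congr (x (k _)); apply: val_inj; rewrite /= inordK.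
have ES : forall j : 'I_m, Ep x k j.+1 = x (k (lift ord0 j)).
  move=> j; rewrite /Ep ltnS ltn_ord; congr (x (k _)); apply: val_inj.
  by rewrite /= inordK // ltnS ltn_ord.
have key : [forall j, (x (k (lift ord0 j)) %| gcd_upto (fun k => x (i k)) j.+1)%N
                   && is_pow (g j) (x (k (lift ord0 j)))]
  = [forall j, (x (k (lift ord0 j)) %| x (i (lift ord0 j)))%N]
    && [forall j, is_pow (g j) (x (k (lift ord0 j)))].
  apply/forallP/andP.
    move=> H; split; apply/forallP => j; have /andP[h1 h2] := H j => //.
    apply: dvdn_trans h1 _; apply: (biggcdn_inf (lift ord0 j)) => //.
  case=> /forallP H1 /forallP H2 j.
  rewrite H2 andbT; apply/dvdn_biggcdP => l lj.
  case: (unliftP ord0 l) lj => [l' -> | ->] lj.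
    apply: dvdn_trans (H1 l'); rewrite -!ES.
    have [] := ch l'.+1 j.+1 => //.
    have e := lift0 l'; rewrite ltn_ord andbT; move: lj; rewrite e.
    by [].
  rewrite -k0 -ES -E0; have [] := ch 0 j.+1 => //.
  by rewrite leq0n ltn_ord.
rewrite key -mulnb natrM.
by rewrite mulrC mulrA.
Qed.

Lemma stepA n m (x : 'I_n -> nat) (g : 'I_m -> nat) (f : 'I_m.+1 -> nat -> C)
    (xi : {ffun 'I_m -> nat} -> C) (i : {ffun 'I_m.+1 -> 'I_n}) :
  injective x -> (forall v, 0 < x v)%N -> factor_closed x -> (forall j, 0 < g j)%N ->
  wmrs g xi f (fun k => x (i k))
  = \sum_(k : {ffun 'I_m.+1 -> 'I_n}) (\prod_j Mj x j (i j) (k j)) * Wc x g f xi k.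
Proof.
move=> xinj xpos fc gpos; rewrite /wmrs big_mkcond /=.
rewrite (eq_bigr (fun d : {ffun 'I_m -> 'I_(x (i ord0)).+1} =>
  \sum_(k : {ffun 'I_m.+1 -> 'I_n})
    ([forall j, (0 < d j)%N && (d j ^ g j %| gcd_upto (fun k => x (i k)) j.+1)%N] &&
     ((k ord0 == i ord0) && [forall j, x (k (lift ord0 j)) == (d j ^ g j)%N]))%:R
    * Gp x f xi k)); last first.
  move=> d _; case: ifP => Pd.
    by rewrite -(A1 f xi xinj fc Pd).
  by rewrite big1 // => k _; rewrite mul0r.
rewrite exchange_big; apply: eq_bigr => k _.
by rewrite -mulr_suml A3 // mulrC A4.
Qed.

Lemma hdet_ext K n (J : {set 'I_K}) (A B : {ffun 'I_K -> 'I_n} -> C) :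
  (forall i, A i = B i) -> hdet J A = hdet J B.
Proof.
move=> AB; rewrite /hdet; congr (_ * _); apply: eq_bigr => s _.
by congr (_ * _); apply: eq_bigr => v _; rewrite AB.
Qed.


Lemma argq_same (F : nat -> C) a : (0 < a)%N -> argq F a a = F 1%N.
Proof. by move=> a0; rewrite /argq a0 dvdnn divnn a0. Qed.

Lemma argq_one (F : nat -> C) a : (0 < a)%N -> argq F a 1 = F a.
Proof. by move=> a0; rewrite /argq a0 dvd1n divn1. Qed.

Lemma prod1C (I : finType) (F : I -> C) : (forall i, F i = 1) -> \prod_i F i = 1.
Proof. by move=> h; rewrite big1 // => i _; exact: h. Qed.

Unset Implicit Arguments.

Theorem corollary4p8 (n m : nat) (x : 'I_n -> nat)
    (g : 'I_m -> nat) (f : 'I_m.+1 -> nat -> C) (xi : {ffun 'I_m -> nat} -> C) :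
  injective x ->
  (forall i, (0 < x i)%N) ->
  factor_closed x ->
  (1 <= m)%N ->
  (forall j, (0 < g j)%N) ->
  let I : {set 'I_m.+1} :=
    if odd m then [set: 'I_m.+1] else [set j : 'I_m.+1 | j != ord0] in
  hdet I (fun i : {ffun 'I_m.+1 -> 'I_n} => wmrs g xi f (fun k => x (i k)))
  = (\prod_(j < m) f (widen_ord (leqnSn m) j) 1%N) ^+ n *
    \prod_(v < n) (xi [ffun => x v] *
                   fpow (\big[lcmn/1%N]_(j < m) g j) (f ord_max) (x v)).
Proof.
move=> xinj xpos fc m1 gpos I.
rewrite (@hdet_ext _ _ I _ (fun i => \sum_(k : {ffun 'I_m.+1 -> 'I_n})
   (\prod_j Mj x j (i j) (k j)) * Wc x g f xi k)); last first.
  by move=> i; apply: stepA.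
rewrite hdet_contract; last first.
  move=> j; rewrite /I; case: ifP => _; first by rewrite inE.
  by rewrite inE negbK => /eqP ->; rewrite /Mj eqxx.
have -> : \prod_(j : 'I_m.+1) \det (Mj x j : 'M[C]_n) = 1.
  apply: prod1C => j; rewrite /Mj; case: ifP => _; first exact: det1.
  exact: det_divmx.
rewrite mul1r (hdet_triang (x := x)) //; last first.
  move=> k Wnz j.
  have Gnz : Gp x f xi k != 0 by move: Wnz; rewrite /Wc mulf_eq0 negb_or => /andP[].
  have hb : (0 <= j <= m)%N by rewrite leq0n -ltnS ltn_ord.
  have [_ dv] := Gp_chain Gnz hb.
  have e1 : Ep x k j = x (k j) by rewrite /Ep ltn_ord inord_val.
  have e0 : Ep x k 0 = x (k ord0).
    by rewrite /Ep /=; congr (x (k _)); apply: val_inj; rewrite /= inordK.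
  by rewrite -e1 -e0; apply: dvdn_leq dv; rewrite e0 xpos.
  rewrite /I; case: ifP => mo.
    by rewrite cardsT card_ord /= mo.
  have -> : [set j : 'I_m.+1 | j != ord0] = [set~ ord0] by apply/setP => j; rewrite !inE.
  by rewrite cardsC1 card_ord /= mo.
set L := \big[lcmn/1%N]_(j < m) g j.
set c := \prod_(j < m) f (widen_ord (leqnSn m) j) 1%N.
have -> : c ^+ n = \prod_(v < n) c by rewrite prodr_const card_ord.
rewrite -prod_split; apply: eq_bigr => v _.
have Ec : forall l, Ep x ([ffun => v] : {ffun 'I_m.+1 -> 'I_n}) l = if (l < m.+1)%N then x v else 1%N.
  by move=> l; rewrite /Ep ffunE.
rewrite /Wc /Gp.
rewrite (eq_bigr (fun j => (is_pow (g j) (x v))%:R)); last by move=> j _; rewrite ffunE.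
rewrite prod_nat_bool is_pow_lcm //.
have -> : xi [ffun j => x ([ffun => v] (lift ord0 j))] = xi [ffun => x v].
  by congr xi; apply/ffunP => j; rewrite !ffunE.
rewrite prod_recr !Ec ltnSn ltnn argq_one //.
rewrite (eq_bigr (fun l : 'I_m => f (widen_ord (leqnSn m) l) 1%N)); last first.
  move=> l _; rewrite !Ec /= ltnS ltnW // ltnS ltn_ord.
  by rewrite argq_same.
rewrite /fpow -/L -/c; case: ifP => _; last by rewrite !(mul0r, mulr0).
by rewrite mul1r mulrCA mulrA.
Qed.
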